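(* Let $(\mathbf Z_n,\mathbf A_{n\times n})$ be generated from the stochastic block model with parameters $(\pi,\rho_nS)$, with $n\rho_n\to\infty$; let $\alpha>0$, $0<\delta<s_{\min}/2$, and suppose $n\rho_n>\frac{4s_{\max}}{\alpha^2\delta^2}$. Then \[ \frac{o_{ab}(\mathbf e_n)}{\rho_n\,n_{ab}(\mathbf e_n)}\in(s_{\min}-\delta,\ s_{\max}+\delta) \] simultaneously for all $a,b\in[k]$ and all $\mathbf e_n\in[k]^n$ satisfying $n_a(\mathbf e_n)\ge\alpha n$ for all $a$, eventually almost surely as $n\to\infty$.
   Context: SBM with parameters $(\pi,\rho_nS)$: $k\ge2$ fixed; $\pi$ a probability vector on $[k]$ with all $\pi_a>0$; $S$ a fixed symmetric $k\times k$ matrix with strictly positive entries and no two identical columns, $s_{\min},s_{\max}$ its minimal and maximal entries; $\rho_n\to0$. $\mathbf Z_n$ i.i.d. with law $\pi$; given $\mathbf Z_n=\mathbf z_n$, $\mathbf A_{n\times n}$ symmetric, zero diagonal, $A_{ij}$ ($i<j$) independent Bernoulli$(\rho_nS_{z_iz_j})$. For $\mathbf e_n\in[k]^n$: $n_a(\mathbf e_n)=\#\{i:e_i=a\}$; $n_{ab}=n_an_b$ ($a\ne b$), $n_{aa}=n_a(n_a-1)$; $o_{ab}(\mathbf e_n)=\sum_{i,j}\mathbf 1\{e_i=a,e_j=b\}A_{ij}$. *)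

(* Defs.v *)
From HB Require Import structures.
From mathcomp Require Import all_boot all_order all_algebra.
From mathcomp Require Import all_classical all_reals all_analysis.
Set Implicit Arguments. Unset Strict Implicit. Unset Printing Implicit Defensive.
Import Order.TTheory GRing.Theory Num.Theory.
Local Open Scope ring_scope.

(* Community labels are [k] = 'I_k; a label vector e_n in [k]^n is {ffun 'I_n -> 'I_k};
   an adjacency matrix is a boolean n x n matrix. *)

Definition is_min_entry (R : realType) (k : nat) (S : 'I_k -> 'I_k -> R) (s : R) :=
  (forall a b, s <= S a b) /\ (exists a b, S a b = s).
Definition is_max_entry (R : realType) (k : nat) (S : 'I_k -> 'I_k -> R) (s : R) :=
  (forall a b, S a b <= s) /\ (exists a b, S a b = s).

Definition ncount (n k : nat) (e : {ffun 'I_n -> 'I_k}) (a : 'I_k) : nat :=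
  #|[set i | e i == a]|.

Definition npair (n k : nat) (e : {ffun 'I_n -> 'I_k}) (a b : 'I_k) : nat :=
  if a == b then (ncount e a * (ncount e a).-1)%N else (ncount e a * ncount e b)%N.

Definition ocount (n k : nat) (A : 'M[bool]_n) (e : {ffun 'I_n -> 'I_k}) (a b : 'I_k) : nat :=
  (\sum_(i < n) \sum_(j < n) ((e i == a) && (e j == b) && A i j))%N.

(* Probability mass function of the SBM with parameters (pi, rho S) at (z, A):
   Z_i iid ~ pi; A symmetric with zero diagonal and, given Z = z,
   A_ij (i<j) independent Bernoulli(rho S_{z_i z_j}). *)
Definition sbm_pmf (R : realType) (n k : nat) (pi : 'I_k -> R) (rho : R)
    (S : 'I_k -> 'I_k -> R) (z : {ffun 'I_n -> 'I_k}) (A : 'M[bool]_n) : R :=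
  (\prod_(i < n) pi (z i)) *
  (if [forall i, forall j, A i j == A j i] && [forall i, ~~ A i i] then
     \prod_(i < n) \prod_(j < n | (i < j)%N)
        (if A i j then rho * S (z i) (z j) else 1 - rho * S (z i) (z j))
   else 0).

(* Main.v *)
Require Import Defs.
From HB Require Import structures.
From mathcomp Require Import all_boot all_order all_algebra.
From mathcomp Require Import ring lra.
From mathcomp Require Import all_classical all_reals all_analysis.
Set Implicit Arguments. Unset Strict Implicit. Unset Printing Implicit Defensive.
Import Order.TTheory GRing.Theory Num.Theory.
Import numFieldNormedType.Exports.
Local Open Scope classical_set_scope.
Local Open Scope ring_scope.
Section Fin.
Variables (R : realType) (n : nat).

Definition symzd (M : 'M[bool]_n) :=
  [forall i, forall j, M i j == M j i] && [forall i, ~~ M i i].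

Definition pmfz (p : 'I_n -> 'I_n -> R) (M : 'M[bool]_n) : R :=
  if symzd M then \prod_(i < n) \prod_(j < n | (i < j)%N)
        (if M i j then p i j else 1 - p i j) else 0.

Definition hM (M : 'M[bool]_n) : {ffun 'I_n * 'I_n -> bool} :=
  [ffun q : 'I_n * 'I_n => (q.1 < q.2)%N && M q.1 q.2].

Lemma prod_pair (F : 'I_n * 'I_n -> R) : \prod_q F q = \prod_i \prod_j F (i, j).
Proof. by rewrite pair_bigA; apply: eq_bigr => -[]. Qed.

Lemma hM_inj : {in [pred M | symzd M] &, injective hM}.
Proof.
move=> M1 M2; rewrite !inE => /andP[/forallP s1 /forallP z1].
move=> /andP[/forallP s2 /forallP z2] /ffunP E.
apply/matrixP => i j; case: (ltngtP i j) => [lt|gt|eq].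
- by have := E (i, j); rewrite !ffunE /= lt.
- have := E (j, i); rewrite !ffunE /= gt /= => h.
  by rewrite (eqP (forallP (s1 i) j)) (eqP (forallP (s2 i) j)).
- have -> : i = j by apply: val_inj.
  by rewrite (negbTE (z1 j)) (negbTE (z2 j)).
Qed.

Lemma sum_sym_le (Phi : {ffun 'I_n * 'I_n -> bool} -> R) :
  (forall h, 0 <= Phi h) ->
  \sum_(M | symzd M) Phi (hM M) <= \sum_h Phi h.
Proof.
move=> P0.
have -> : \sum_(M | symzd M) Phi (hM M) =
          \sum_(M in [pred M | symzd M]) Phi (hM M).
  by apply: eq_bigl => M; rewrite inE.
rewrite -(big_imset _ hM_inj).
rewrite [leRHS](bigID (mem (imset hM (mem [pred M | symzd M])))) /=.
by rewrite lerDl sumr_ge0.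
Qed.

Lemma mgf (p : 'I_n -> 'I_n -> R) (d : 'I_n -> 'I_n -> nat) (x : R) :
  0 <= x -> (forall i j, 0 <= p i j <= 1) ->
  \sum_M pmfz p M * x ^+ (\sum_(i < n) \sum_(j < n | (i < j)%N) d i j * M i j)%N
  <= expR (\sum_(i < n) \sum_(j < n) (if (i < j)%N then p i j * (x ^+ d i j - 1) else 0)).
Proof.
move=> x0 p01.
pose phi (q : 'I_n * 'I_n) (b : bool) : R :=
  if (q.1 < q.2)%N then (if b then p q.1 q.2 * x ^+ d q.1 q.2 else 1 - p q.1 q.2)
  else (if b then 0 else 1).
have phi0 q b : 0 <= phi q b.
  rewrite /phi; have /andP[h0 h1] := p01 q.1 q.2.
  by case: ifP; case: b => //; rewrite ?subr_ge0 ?mulr_ge0 ?exprn_ge0.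
pose Phi (h : {ffun 'I_n * 'I_n -> bool}) := \prod_q phi q (h q).
have -> : \sum_M pmfz p M * x ^+ (\sum_(i < n) \sum_(j < n | (i < j)%N) d i j * M i j)%N
    = \sum_(M | symzd M) Phi (hM M).
  rewrite [RHS]big_mkcond /=; apply: eq_bigr => M _; rewrite /pmfz.
  case: ifP => sM; last by rewrite mul0r.
  rewrite expr_sum -big_split /= /Phi prod_pair.
  apply: eq_bigr => i _; rewrite expr_sum -big_split /= [LHS]big_mkcond /=.
  apply: eq_bigr => j _; rewrite /phi ffunE /=.
  by case: ifP => // _; case: (M i j); rewrite ?muln1 ?muln0 ?expr0 ?mulr1.
have hPhi : forall h, 0 <= Phi h by move=> h; apply: prodr_ge0 => q _; apply: phi0.
apply: le_trans (sum_sym_le hPhi) _.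
rewrite /Phi -(bigA_distr_bigA (fun q b => phi q b)) /=.
rewrite expR_sum prod_pair.
apply: ler_prod => i _; apply/andP; split.
  by apply: prodr_ge0 => j _; apply: sumr_ge0 => b _; apply: phi0.
rewrite expR_sum; apply: ler_prod => j _; apply/andP; split.
  by apply: sumr_ge0 => b _; apply: phi0.
rewrite big_bool /phi /=; case: ifP => _; last by rewrite expR0 add0r.
apply: le_trans (expR_ge1Dx _); rewrite le_eqVlt; apply/orP; left; apply/eqP; ring.
Qed.

End Fin.
Section Comb.
Variables (n k : nat).
Implicit Types (e : {ffun 'I_n -> 'I_k}) (a b : 'I_k).

Lemma sym_split (g : 'I_n -> 'I_n -> nat) : (forall i, g i i = 0) ->
  (\sum_(i < n) \sum_(j < n) g i j = \sum_(i < n) \sum_(j < n | (i < j)%N) (g i j + g j i))%N.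
Proof.
move=> g0.
have E i : (\sum_(j < n) g i j = \sum_(j < n | (i < j)%N) g i j + \sum_(j < n | (j < i)%N) g i j)%N.
  rewrite (bigID (fun j : 'I_n => (i < j)%N)) /=; congr (_ + _)%N.
  rewrite big_mkcond [RHS]big_mkcond; apply: eq_bigr => j _ /=.
  case: (ltngtP i j) => h //=.
  by have -> : j = i by apply: val_inj.
under eq_bigr do rewrite E.
rewrite big_split /=.
have -> : (\sum_(i < n) \sum_(j < n | (j < i)%N) g i j = \sum_(i < n) \sum_(j < n | (i < j)%N) g j i)%N.
  rewrite (eq_bigr (fun i : 'I_n => \sum_(j < n) if (j < i)%N then g i j else 0)%N); last first.
    by move=> i _; rewrite big_mkcond.
  by rewrite exchange_big /=; apply: eq_bigr => i _; rewrite [RHS]big_mkcond.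
by rewrite -big_split /=; apply: eq_bigr => i _; rewrite -big_split.
Qed.

Lemma count_sum e a : ncount e a = (\sum_(i < n) (e i == a))%N.
Proof.
rewrite /ncount -sum1_card big_mkcond /=; apply: eq_bigr => i _.
by rewrite inE; case: (e i == a).
Qed.

Lemma npairE e a b :
  npair e a b = (\sum_(i < n) \sum_(j < n) (((e i == a) && (e j == b)) * (i != j)))%N.
Proof.
have H : (\sum_(i < n) \sum_(j < n) ((e i == a) && (e j == b) : nat) = ncount e a * ncount e b)%N.
  rewrite !count_sum big_distrl /=; apply: eq_bigr => i _.
  rewrite big_distrr /=; apply: eq_bigr => j _.
  by case: (e i == a); case: (e j == b).
have D : (\sum_(i < n) \sum_(j < n) ((e i == a) && (e j == b) : nat) =
   \sum_(i < n) \sum_(j < n) (((e i == a) && (e j == b)) * (i != j)) +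
   \sum_(i < n) ((e i == a) && (e i == b) : nat))%N.
  rewrite -big_split /=; apply: eq_bigr => i _.
  rewrite (bigD1 i) //= [X in _ = (X + _)%N](bigD1 i) //= eqxx muln0 add0n addnC.
  congr (_ + _)%N; apply: eq_bigr => j hj.
  by rewrite (negbTE (_ : i != j)) ?muln1 // eq_sym.
have Dg : (\sum_(i < n) ((e i == a) && (e i == b) : nat) = if a == b then ncount e a else 0)%N.
  case: eqP => [<-|nab].
    by rewrite count_sum; apply: eq_bigr => i _; rewrite andbb.
  rewrite big1 // => i _.
  have : ~~ ((e i == a) && (e i == b)).
    by apply/negP => /andP[/eqP -> /eqP].
  by move/negbTE ->.
rewrite /npair; move: D; rewrite H Dg; case: eqP => [<-|_]; last by rewrite addn0.
set X := (\sum_(i < n) _)%N => D.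
rewrite -subn1 mulnBr muln1 D addnK //.
Qed.

Definition dd e a b (i j : 'I_n) : nat :=
  ((e i == a) && (e j == b)) + ((e j == a) && (e i == b)).

Lemma dd_le2 e a b i j : (dd e a b i j <= 2)%N.
Proof. by rewrite /dd; case: (_ && _); case: (_ && _). Qed.

Lemma ocountE (M : 'M[bool]_n) e a b : symzd M ->
  ocount M e a b = (\sum_(i < n) \sum_(j < n | (i < j)%N) dd e a b i j * M i j)%N.
Proof.
move=> /andP[/forallP s /forallP z].
rewrite /ocount sym_split; last by move=> i; rewrite (negbTE (z i)) andbF.
apply: eq_bigr => i _; apply: eq_bigr => j _.
rewrite /dd -(eqP (forallP (s i) j)).
by case: (M i j); rewrite ?andbT ?andbF ?muln1 ?muln0.
Qed.

Lemma sum_dd e a b :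
  (\sum_(i < n) \sum_(j < n | (i < j)%N) dd e a b i j)%N = npair e a b.
Proof.
rewrite npairE sym_split; last by move=> i; rewrite eqxx muln0.
apply: eq_bigr => i _; apply: eq_bigr => j h.
have E1 : (i == j) = false by apply/eqP => E; rewrite E ltnn in h.
have E2 : (j == i) = false by apply/eqP => E; rewrite E ltnn in h.
by rewrite /dd E1 E2 !muln1.
Qed.

End Comb.
Lemma up_ineq (R : realFieldType) (shi dl u L : R) : 0 < u -> u <= 1/2 ->
  u * (5*shi + dl) <= dl -> u <= L*(1+u) -> 0 < shi -> 0 < dl -> 0 <= L ->
  shi*(u+u^+2) - (shi+dl)*L + u*dl/2 <= 0.
Proof.
move=> u0 u2 uh hL s0 d0 L0.
have h1 : 0 <= (shi+dl)*(L*(1+u) - u) by apply: mulr_ge0; lra.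
have h2 : shi*(2*u+u^+2) + dl*u/2 <= dl/2.
  have : u^+2 <= u/2 by rewrite expr2; nra.
  nra.
have h3 : (shi*(u+u^+2) - (shi+dl)*L + u*dl/2) * (1+u) <= 0.
  have e : (shi*(u+u^+2) - (shi+dl)*L + u*dl/2) * (1+u) =
     u * (shi*(2*u+u^+2) + dl*u/2 - dl/2) - (shi+dl)*(L*(1+u) - u) by field.
  rewrite e.
  have : u * (shi*(2*u+u^+2) + dl*u/2 - dl/2) <= 0 by apply: mulr_ge0_le0; lra.
  lra.
nra.
Qed.

Lemma lo_ineq (R : realFieldType) (slo dl u L : R) : 0 < u -> u <= 1/2 ->
  4 * u * slo <= dl -> L <= u -> 0 < slo -> 0 < dl -> dl <= slo -> 0 <= L ->
  - slo*(u-2*u^+2) + (slo - dl)*L + u*dl/2 <= 0.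
Proof.
move=> u0 u2 ul hL s0 d0 ds L0.
have h1 : (slo - dl)*L <= (slo - dl)*u by apply: ler_wpM2l; lra.
have e : - slo*(u-2*u^+2) + (slo - dl)*u + u*dl/2 = u * (2*u*slo - dl/2) by field.
have : u * (2*u*slo - dl/2) <= 0 by apply: mulr_ge0_le0; lra.
lra.
Qed.

Lemma xd_up (R : realFieldType) (u : R) (m : nat) : 0 <= u -> (m <= 2)%N ->
  (1+u)^+m - 1 <= m%:R * (u + u^+2).
Proof.
move=> u0; case: m => [|[|[|m]]] // _.
- by rewrite expr0 subrr mul0r.
- by rewrite expr1 mul1r; nra.
- rewrite expr2; nra.
Qed.

Lemma xd_lo (R : realFieldType) (u : R) (m : nat) : 0 <= u -> (m <= 2)%N ->
  (1+u)^-1^+m - 1 <= m%:R * (- (u - 2 * u^+2)).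
Proof.
move=> u0; have u1 : 0 < 1 + u by lra.
case: m => [|[|[|m]]] // _.
- by rewrite expr0 subrr mul0r.
- rewrite expr1 mul1r lerBlDr -div1r ler_pdivrMr //.
  nra.
- rewrite expr2 -invrM ?unitfE ?gt_eqF // lerBlDr -div1r ler_pdivrMr ?mulr_gt0 //.
  nra.
Qed.
Section Tail.
Variables (R : realType) (n : nat) (p : 'I_n -> 'I_n -> R) (d : 'I_n -> 'I_n -> nat).
Variables (N : nat) (r slo shi dl u : R).
Hypotheses (hp : forall i j, r * slo <= p i j <= r * shi) (hp1 : forall i j, p i j <= 1).
Hypotheses (hd : forall i j, (d i j <= 2)%N)
  (hN : (\sum_(i < n) \sum_(j < n | (i < j)%N) d i j)%N = N).
Hypotheses (r0 : 0 < r) (slo0 : 0 < slo) (hs : slo <= shi) (d0 : 0 < dl) (hdl : dl <= slo).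
Hypotheses (u0 : 0 < u) (u2 : u <= 1/2) (uhi : u * (5 * shi + dl) <= dl) (ulo : 4 * u * slo <= dl).

Ltac gh := have _u0 := u0; have _u2 := u2; have _slo0 := slo0; have _hs := hs;
  have _d0 := d0; have _hdl := hdl; have _r0 := r0.

Definition Yd (M : 'M[bool]_n) : nat := (\sum_(i < n) \sum_(j < n | (i < j)%N) d i j * M i j)%N.
Definition hiT M := expR (((Yd M)%:R - r * N%:R * (shi + dl)) * ln (1 + u)).
Definition loT M := expR ((r * N%:R * (slo - dl) - (Yd M)%:R) * ln (1 + u)).

Lemma Lfacts : [/\ expR (ln (1 + u)) = 1 + u, 0 <= ln (1 + u), ln (1 + u) <= u &
   u <= ln (1 + u) * (1 + u)].
Proof.
gh; have u1 : 0 < 1 + u by lra.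
split.
- by rewrite lnK // posrE.
- by apply: ln_ge0; lra.
- by apply: le_ln1Dx; lra.
have hlt : u / (1 + u) < 1 by rewrite ltr_pdivrMr // mul1r; lra.
have h := @le_ln1Dx R (- (u / (1 + u))) ltac:(lra).
have e : 1 + - (u / (1 + u)) = (1 + u)^-1 by field; rewrite gt_eqF.
rewrite e lnV ?posrE // lerN2 in h.
by rewrite -ler_pdivrMr.
Qed.

Lemma psum : (N%:R : R) = \sum_(i < n) \sum_(j < n) (if (i < j)%N then (d i j)%:R else 0).
Proof.
rewrite -hN natr_sum; apply: eq_bigr => i _; by rewrite natr_sum big_mkcond.
Qed.

Lemma p01 i j : 0 <= p i j <= 1.
Proof.
have /andP[h _] := hp i j; rewrite hp1 andbT (le_trans _ h) //.
by rewrite mulr_ge0 // ltW.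
Qed.

Lemma hi_bound : \sum_M pmfz p M * hiT M <= expR (- (r * N%:R * (u * dl / 2))).
Proof.
gh; have [eL L0 Lu uL] := Lfacts.
have hi M : hiT M = (1 + u) ^+ Yd M * expR (- (r * N%:R * (shi + dl)) * ln (1 + u)).
  by rewrite /hiT mulrBl expRD expRM_natl eL mulNr.
under eq_bigr do rewrite hi mulrA.
rewrite -big_distrl /= /Yd.
apply: le_trans (ler_wpM2r (expR_ge0 _) (mgf (x := 1 + u) d _ p01)) _.
  by lra.
rewrite -expRD ler_expR.
have S1 : \sum_(i < n) \sum_(j < n) (if (i < j)%N then p i j * ((1 + u) ^+ d i j - 1) else 0)
   <= r * shi * (u + u ^+ 2) * N%:R.
  rewrite psum mulr_sumr; apply: ler_sum => i _; rewrite mulr_sumr; apply: ler_sum => j _.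
  case: ifP => _; last by rewrite mulr0.
  have hx := @xd_up R u (d i j) (ltW u0) (hd i j).
  have /andP[pl pu] := hp i j.
  have p0 : 0 <= p i j by have /andP[] := p01 i j.
  apply: le_trans (ler_wpM2l p0 hx) _.
  have h2 : p i j * ((d i j)%:R * (u + u ^+ 2)) <= r * shi * ((d i j)%:R * (u + u ^+ 2)).
    by apply: ler_wpM2r => //; apply: mulr_ge0 => //; apply: addr_ge0; [apply: ltW | apply: exprn_ge0; apply: ltW].
  apply: (le_trans h2); rewrite le_eqVlt; apply/orP; left; apply/eqP; ring.
have key := @up_ineq R shi dl u (ln (1 + u)) u0 u2 uhi uL (lt_le_trans slo0 hs) d0 L0.
have A0 : 0 <= r * N%:R by rewrite mulr_ge0 // ltW.
have := mulr_ge0_le0 A0 key.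
have -> : r * N%:R * (shi * (u + u ^+ 2) - (shi + dl) * ln (1 + u) + u * dl / 2) =
   r * shi * (u + u ^+ 2) * N%:R + - (r * N%:R * (shi + dl)) * ln (1 + u)
   + r * N%:R * (u * dl / 2) by ring.
lra.
Qed.

Lemma lo_bound : \sum_M pmfz p M * loT M <= expR (- (r * N%:R * (u * dl / 2))).
Proof.
gh; have [eL L0 Lu uL] := Lfacts.
have u1 : 0 < 1 + u by lra.
have lo M : loT M = (1 + u)^-1 ^+ Yd M * expR (r * N%:R * (slo - dl) * ln (1 + u)).
  rewrite /loT mulrBl expRD mulrC; congr (_ * _).
  by rewrite expRN expRM_natl eL exprVn.
under eq_bigr do rewrite lo mulrA.
rewrite -big_distrl /= /Yd.
apply: le_trans (ler_wpM2r (expR_ge0 _) (mgf (x := (1 + u)^-1) d _ p01)) _.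
  by rewrite invr_ge0; lra.
rewrite -expRD ler_expR.
have k0 : - (u - 2 * u ^+ 2) <= 0 by rewrite oppr_le0; nra.
have S1 : \sum_(i < n) \sum_(j < n) (if (i < j)%N then p i j * ((1 + u)^-1 ^+ d i j - 1) else 0)
   <= r * slo * (- (u - 2 * u ^+ 2)) * N%:R.
  rewrite psum mulr_sumr; apply: ler_sum => i _; rewrite mulr_sumr; apply: ler_sum => j _.
  case: ifP => _; last by rewrite mulr0.
  have hx := @xd_lo R u (d i j) (ltW u0) (hd i j).
  have /andP[pl pu] := hp i j.
  have p0 : 0 <= p i j by have /andP[] := p01 i j.
  apply: le_trans (ler_wpM2l p0 hx) _.
  have dk : (d i j)%:R * (- (u - 2 * u ^+ 2)) <= 0 by apply: mulr_ge0_le0.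
  have h2 : p i j * ((d i j)%:R * (- (u - 2 * u ^+ 2))) <= r * slo * ((d i j)%:R * (- (u - 2 * u ^+ 2))).
    by apply: ler_wnM2r.
  apply: (le_trans h2); rewrite le_eqVlt; apply/orP; left; apply/eqP; ring.
have key := @lo_ineq R slo dl u (ln (1 + u)) u0 u2 ulo Lu slo0 d0 hdl L0.
have A0 : 0 <= r * N%:R by rewrite mulr_ge0 // ltW.
have := mulr_ge0_le0 A0 key.
have -> : r * N%:R * (- slo * (u - 2 * u ^+ 2) + (slo - dl) * ln (1 + u) + u * dl / 2) =
   r * slo * (- (u - 2 * u ^+ 2)) * N%:R + r * N%:R * (slo - dl) * ln (1 + u)
   + r * N%:R * (u * dl / 2) by ring.
lra.
Qed.

Lemma tails : \sum_M pmfz p M * (hiT M + loT M) <= 2 * expR (- (r * N%:R * (u * dl / 2))).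
Proof.
gh; under eq_bigr do rewrite mulrDr.
rewrite big_split /=.
have := hi_bound; have := lo_bound; lra.
Qed.

Lemma ind_bound (M : 'M[bool]_n) : (0 < N)%N ->
  ~~ ((slo - dl < (Yd M)%:R / (r * N%:R)) && ((Yd M)%:R / (r * N%:R) < shi + dl)) ->
  1 <= hiT M + loT M.
Proof.
gh; have [eL L0 Lu uL] := Lfacts.
move=> N0; have rN : 0 < r * N%:R by rewrite mulr_gt0 // ltr0n.
rewrite negb_and -!leNgt => /orP[h|h].
- rewrite ler_pdivrMr // in h.
  rewrite -[1]add0r; apply: lerD; first exact: expR_ge0.
  rewrite -expR0 ler_expR /loT; apply: mulr_ge0 => //; lra.
- rewrite ler_pdivlMr // in h.
  rewrite -[1]addr0; apply: lerD; last exact: expR_ge0.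
  rewrite -expR0 ler_expR /hiT; apply: mulr_ge0 => //; lra.
Qed.

End Tail.
Lemma sum_pair (R : realType) (A B : finType) (F : A * B -> R) :
  \sum_q F q = \sum_a \sum_b F (a, b).
Proof. by rewrite pair_bigA; apply: eq_bigr => -[]. Qed.

Definition condb (R : realType) (n k : nat) (alpha : R) (e : {ffun 'I_n -> 'I_k}) : bool :=
  [forall a, alpha * n%:R <= (ncount e a)%:R].

Definition okb (R : realType) (n k : nat) (rh smin smax dl : R) (M : 'M[bool]_n)
  (e : {ffun 'I_n -> 'I_k}) : bool :=
  [forall a, [forall b, smin - dl < (ocount M e a b)%:R / (rh * (npair e a b)%:R) < smax + dl]].

Definition badb (R : realType) (n k : nat) (alpha rh smin smax dl : R)
  (zM : {ffun 'I_n -> 'I_k} * 'M[bool]_n) : bool :=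
  ~~ [forall e : {ffun 'I_n -> 'I_k}, condb alpha e ==> okb rh smin smax dl zM.2 e].

Section Fin2.
Variables (R : realType) (n k : nat) (pi : 'I_k -> R) (S : 'I_k -> 'I_k -> R).
Variables (rh smin smax alpha dl u : R).
Hypotheses (pi0 : forall a, 0 <= pi a) (pi1 : \sum_(a < k) pi a = 1).
Hypotheses (Smin : forall a b, smin <= S a b) (Smax : forall a b, S a b <= smax).
Hypotheses (rh0 : 0 < rh) (rh1 : forall a b, rh * S a b <= 1).
Hypotheses (smin0 : 0 < smin) (hs : smin <= smax) (d0 : 0 < dl) (hdl : dl <= smin).
Hypotheses (u0 : 0 < u) (u2 : u <= 1/2) (uhi : u * (5 * smax + dl) <= dl) (ulo : 4 * u * smin <= dl).
Hypothesis (an : 2 <= alpha * n%:R).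

Definition pz (z : {ffun 'I_n -> 'I_k}) (i j : 'I_n) : R := rh * S (z i) (z j).

Lemma sbmE (z : {ffun 'I_n -> 'I_k}) (M : 'M[bool]_n) : sbm_pmf pi rh S z M = (\prod_(i < n) pi (z i)) * pmfz (pz z) M.
Proof. by []. Qed.

Lemma pz_hyp (z : {ffun 'I_n -> 'I_k}) : (forall i j, rh * smin <= pz z i j <= rh * smax) /\ (forall i j, pz z i j <= 1).
Proof.
split=> i j; last exact: rh1.
by rewrite /pz !ler_pM2l // Smin Smax.
Qed.

Lemma pz01 (z : {ffun 'I_n -> 'I_k}) (i j : 'I_n) : 0 <= pz z i j <= 1.
Proof.
have [h1 h2] := pz_hyp z; rewrite h2 andbT; have /andP[h _] := h1 i j.
by apply: le_trans h; rewrite mulr_ge0 // ltW.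
Qed.

Lemma pmfz_ge0 (z : {ffun 'I_n -> 'I_k}) (M : 'M[bool]_n) : 0 <= pmfz (pz z) M.
Proof.
rewrite /pmfz; case: ifP => // _; apply: prodr_ge0 => i _; apply: prodr_ge0 => j _.
have /andP[h1 h2] := pz01 z i j.
by case: (M i j) => //; rewrite subr_ge0.
Qed.

Lemma sbm_ge0 (z : {ffun 'I_n -> 'I_k}) (M : 'M[bool]_n) : 0 <= sbm_pmf pi rh S z M.
Proof. by rewrite sbmE mulr_ge0 ?pmfz_ge0 //; apply: prodr_ge0. Qed.

Lemma npair_lb (e : {ffun 'I_n -> 'I_k}) (a b : 'I_k) : condb alpha e ->
  (alpha * n%:R) ^+ 2 / 2 <= (npair e a b)%:R /\ (0 < npair e a b)%N.
Proof.
have _an := an.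
move=> /forallP ce; have ha := ce a; have hb := ce b.
have hx : 2 <= ((ncount e a)%:R : R) by apply: le_trans ha.
have hx1 : (1 <= ncount e a)%N by rewrite -(ler_nat R); apply: le_trans hx; rewrite ler1n.
have hy : 2 <= ((ncount e b)%:R : R) by apply: le_trans hb.
have hy1 : (1 <= ncount e b)%N by rewrite -(ler_nat R); apply: le_trans hy; rewrite ler1n.
rewrite /npair; case: eqP => [eab|nab].
  have hx2 : (2 <= ncount e a)%N by rewrite -(ler_nat R).
  split; last by rewrite muln_gt0 hx1 /= -subn1 subn_gt0.
  rewrite natrM -subn1 natrB // .
  set x := (ncount e a)%:R in ha hx *.
  set y := alpha * n%:R in ha _an *.
  nra.
split; last by rewrite muln_gt0 hx1.
rewrite natrM.
set x := (ncount e a)%:R in ha hx *.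
set z := (ncount e b)%:R in hb hy *.
set y := alpha * n%:R in ha hb _an *.
nra.
Qed.

Definition Bn := 2 * expR (- (rh * ((alpha * n%:R) ^+ 2 / 2) * (u * dl / 2))).

Definition Tm (e : {ffun 'I_n -> 'I_k}) (a b : 'I_k) (M : 'M[bool]_n) :=
  hiT (dd e a b) (npair e a b) rh smax dl u M + loT (dd e a b) (npair e a b) rh smin dl u M.

Lemma term_bound (e : {ffun 'I_n -> 'I_k}) (a b : 'I_k) : condb alpha e ->
  \sum_(zM : {ffun 'I_n -> 'I_k} * 'M[bool]_n) sbm_pmf pi rh S zM.1 zM.2 * Tm e a b zM.2 <= Bn.
Proof.
move=> ce; have [Nlb Npos] := npair_lb a b ce.
rewrite sum_pair /=.
have E : forall z : {ffun 'I_n -> 'I_k}, \sum_M sbm_pmf pi rh S z M * Tm e a b M =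
   (\prod_(i < n) pi (z i)) * \sum_M pmfz (pz z) M * Tm e a b M.
  by move=> z; rewrite big_distrr /=; apply: eq_bigr => M _; rewrite sbmE mulrA.
under eq_bigr do rewrite E.
have T (z : {ffun 'I_n -> 'I_k}) : \sum_M pmfz (pz z) M * Tm e a b M <= 2 * expR (- (rh * (npair e a b)%:R * (u * dl / 2))).
  have [h1 h2] := pz_hyp z.
  exact: (tails h1 h2 (dd_le2 e a b) (sum_dd e a b) rh0 smin0 hs d0 hdl u0 u2 uhi ulo).
apply: le_trans (_ : \sum_(z : {ffun 'I_n -> 'I_k}) (\prod_(i < n) pi (z i)) * (2 * expR (- (rh * (npair e a b)%:R * (u * dl / 2))))  <= _).
  apply: ler_sum => z _; apply: ler_wpM2l; last exact: T.
  by apply: prodr_ge0.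
rewrite -big_distrl /=.
have -> : \sum_(z : {ffun 'I_n -> 'I_k}) \prod_(i < n) pi (z i) = 1.
  rewrite -(bigA_distr_bigA (fun (i : 'I_n) (a : 'I_k) => pi a)) /=.
  by apply: big1 => i _; exact: pi1.
rewrite mul1r /Bn ler_wpM2l // ler_expR lerN2.
have c0 : 0 <= u * dl / 2 by rewrite divr_ge0 // mulr_ge0 // ltW.
by apply: ler_wpM2r => //; apply: ler_wpM2l => //; apply: ltW.
Qed.

Lemma ind_sum (zM : {ffun 'I_n -> 'I_k} * 'M[bool]_n) : (badb alpha rh smin smax dl zM)%:R * sbm_pmf pi rh S zM.1 zM.2 <=
  \sum_(e : {ffun 'I_n -> 'I_k}) \sum_(a < k) \sum_(b < k) (condb alpha e)%:R * (sbm_pmf pi rh S zM.1 zM.2 * Tm e a b zM.2).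
Proof.
have T0 (e : {ffun 'I_n -> 'I_k}) (a b : 'I_k) (M : 'M[bool]_n) : 0 <= Tm e a b M by rewrite /Tm /hiT /loT addr_ge0 ?expR_ge0.
have F0 (e : {ffun 'I_n -> 'I_k}) (a b : 'I_k) : 0 <= (condb alpha e)%:R * (sbm_pmf pi rh S zM.1 zM.2 * Tm e a b zM.2).
  by apply: mulr_ge0; [apply: ler0n | apply: mulr_ge0; [apply: sbm_ge0 | apply: T0]].
have S0 : 0 <= \sum_(e : {ffun 'I_n -> 'I_k}) \sum_(a < k) \sum_(b < k) (condb alpha e)%:R * (sbm_pmf pi rh S zM.1 zM.2 * Tm e a b zM.2).
  by do 3 (apply: sumr_ge0 => ? _).
case: zM S0 F0 => z M /= S0 F0.
case bd: (badb alpha rh smin smax dl (z, M)); last by rewrite mul0r.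
rewrite mul1r.
case sM: (symzd M); last first.
  by rewrite {1}sbmE /pmfz sM mulr0.
move: bd; rewrite /badb /= => /forallPn [e]; rewrite negb_imply => /andP[ce].
move=> /forallPn [a] /forallPn [b] hab.
have [_ Npos] := npair_lb a b ce.
rewrite (ocountE e a b sM) in hab.
have h1 := ind_bound rh0 smin0 hs d0 hdl u0 u2 Npos hab.
rewrite (bigD1 e) //= (bigD1 a) //= (bigD1 b) //= ce mul1r.
apply: le_trans (_ : sbm_pmf pi rh S z M * Tm e a b M <= _).
  by rewrite -{1}[sbm_pmf _ _ _ _ _]mulr1 ler_wpM2l ?sbm_ge0.
rewrite -!addrA lerDl.
by repeat (apply: sbm_ge0 || apply: T0 || apply: ler0n || apply: addr_ge0 ||
   (apply: sumr_ge0 => ? _) || apply: mulr_ge0).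
Qed.

Lemma fin_bound :
  \sum_(zM : {ffun 'I_n -> 'I_k} * 'M[bool]_n | badb alpha rh smin smax dl zM) sbm_pmf pi rh S zM.1 zM.2
    <= \sum_(e : {ffun 'I_n -> 'I_k}) \sum_(a < k) \sum_(b < k) Bn.
Proof.
rewrite big_mkcond /=.
apply: le_trans (_ : \sum_zM \sum_(e : {ffun 'I_n -> 'I_k}) \sum_(a < k) \sum_(b < k) (condb alpha e)%:R *
    (sbm_pmf pi rh S zM.1 zM.2 * Tm e a b zM.2) <= _).
  apply: ler_sum => zM _; have := ind_sum zM.
  by case: (badb _ _ _ _ _ _); rewrite ?mul1r ?mul0r.
rewrite exchange_big /=; apply: ler_sum => e _.
rewrite exchange_big /=; apply: ler_sum => a _.
rewrite exchange_big /=; apply: ler_sum => b _.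
case ce: (condb alpha e).
  under eq_bigr do rewrite mul1r.
  exact: term_bound.
rewrite big1; first by rewrite /Bn mulr_ge0 ?expR_ge0.
by move=> ? _; rewrite mul0r.
Qed.

End Fin2.
Lemma final_ineq (R : realType) (n k : nat) (x : R) : (1 <= n)%N -> (1 <= k)%N ->
  ((2 * k) ^ 3)%:R <= x ->
  (k ^ (n + 2))%:R * (2 * expR (- (n%:R * x))) <= 1 / (2 ^ n.+1)%:R.
Proof.
move=> n1 k1 hx.
set X := expR x.
have X0 : 0 < X := expR_gt0 x.
have hX : ((2 * k) ^ 3)%:R <= X.
  by apply: le_trans hx _; apply: le_trans (expR_ge1Dx x); rewrite lerDr ler01.
have hXn : ((2 * k) ^ (3 * n))%:R <= X ^+ n.
  rewrite expnM natrX; apply: lerXn2r => //; rewrite nnegrE ?ler0n //; exact: ltW.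
have hk : (2 ^ n.+1 * (2 * k ^ (n + 2)) <= (2 * k) ^ (3 * n))%N.
  have -> : (2 ^ n.+1 * (2 * k ^ (n + 2)) = (2 * k) ^ (n + 2))%N.
    by rewrite expnMn mulnA -expnSr addn2.
  apply: leq_pexp2l; first by rewrite muln_gt0 k1.
  by rewrite mulSn leq_add2l mulSn mul1n (leq_add n1 n1).
rewrite expRN expRM_natl -/X.
rewrite ler_pdivlMr ?ltr0n ?expn_gt0 //.
have -> : (k ^ (n + 2))%:R * (2 * (X ^+ n)^-1) * (2 ^ n.+1)%:R =
    ((2 ^ n.+1 * (2 * k ^ (n + 2)))%N)%:R / X ^+ n.
  rewrite !natrM; field.
  by rewrite expf_neq0 // gt_eqF.
rewrite ler_pdivrMr ?exprn_gt0 // mul1r.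
by apply: le_trans hXn; rewrite ler_nat.
Qed.

Lemma sum_const3 (R : realType) (n k : nat) (B : R) :
  \sum_(e : {ffun 'I_n -> 'I_k}) \sum_(a < k) \sum_(b < k) B = (k ^ (n + 2))%:R * B.
Proof.
rewrite !sumr_const !card_ord card_ffun !card_ord -!mulrnA [RHS]mulr_natl.
by rewrite addn2 !expnS.
Qed.

Lemma meas_bigsetU_le d (T : measurableType d) (R : realType) (P : probability T R)
  (I : Type) (r : seq I) (Q : pred I) (G : I -> set T) :
  (forall i, measurable (G i)) ->
  (P (\big[setU/set0]_(i <- r | Q i) G i) <= \sum_(i <- r | Q i) P (G i))%E.
Proof.
move=> mG; elim: r => [|i r IH]; first by rewrite !big_nil measure0.
rewrite !big_cons; case: (Q i) => //.
apply: le_trans (measureU2 _ _ _) _ => //.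
  by apply: bigsetU_measurable.
by apply: leeD.
Qed.

Lemma in_bigsetU (T : Type) (I : eqType) (r : seq I) (Q : pred I) (G : I -> set T) i x :
  i \in r -> Q i -> G i x -> (\big[setU/set0]_(j <- r | Q j) G j) x.
Proof.
elim: r => // j r IH; rewrite inE big_cons => /orP[/eqP <-|ir] Qi Gx.
  by rewrite Qi; left.
by case: (Q j); [right|]; exact: IH.
Qed.
Unset Implicit Arguments.

Theorem corollary1
  (R : realType) (d : measure_display) (T : measurableType d) (P : probability T R)
  (k : nat) (pi : 'I_k -> R) (S : 'I_k -> 'I_k -> R) (rho : nat -> R)
  (smin smax alpha delta : R)
  (Z : forall n : nat, T -> {ffun 'I_n -> 'I_k})
  (A : forall n : nat, T -> 'M[bool]_n) :
  (2 <= k)%N ->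
  (forall a, 0 < pi a) -> \sum_(a < k) pi a = 1 ->
  (forall a b, S a b = S b a) -> (forall a b, 0 < S a b) ->
  (forall a b, a != b -> exists c, S c a != S c b) ->
  is_min_entry S smin -> is_max_entry S smax ->
  (forall n, 0 < rho n) -> (forall n a b, rho n * S a b <= 1) ->
  rho @ \oo --> 0 ->
  (fun n => n%:R * rho n) @ \oo --> +oo ->
  (forall n (z : {ffun 'I_n -> 'I_k}) (M : 'M[bool]_n),
     measurable [set w | Z n w = z /\ A n w = M] /\
     P [set w | Z n w = z /\ A n w = M] = (sbm_pmf pi (rho n) S z M)%:E) ->
  0 < alpha -> 0 < delta -> delta < smin / 2 ->
  (\forall n \near \oo, n%:R * rho n > 4 * smax / (alpha ^+ 2 * delta ^+ 2)) ->
  {ae P, forall w,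
     \forall n \near \oo,
       forall e : {ffun 'I_n -> 'I_k},
         (forall a, alpha * n%:R <= (ncount e a)%:R) ->
         forall a b,
           smin - delta < (ocount (A n w) e a b)%:R / (rho n * (npair e a b)%:R) < smax + delta}.
Proof.
move=> k2 pi0 pi1 Ssym Spos Sdist [Smin [a0 [b0 hmin]]] [Smax [a1 [b1 hmax]]].
move=> rho0 rho1 rho_to0 nrho atoms alpha0 delta0 hdelta _.
have smin0 : 0 < smin by rewrite -hmin Spos.
have hs : smin <= smax by apply: le_trans (Smin a0 b0) (Smax a0 b0).
have smax0 : 0 < smax by apply: lt_le_trans smin0 hs.
have hdl : delta <= smin by lra.
have pi0' a : 0 <= pi a by apply: ltW.
pose D := 8 * smax + 2 * delta + 2.
have hD : D = 8 * smax + 2 * delta + 2 by [].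
have D0 : 0 < D by rewrite hD; lra.
pose u := delta / D.
have uD : u * D = delta by rewrite /u divfK // gt_eqF.
have u0 : 0 < u by rewrite /u divr_gt0.
have u2 : u <= 1/2.
  have : u * D <= 1/2 * D by rewrite uD hD; lra.
  by rewrite ler_pM2r.
have uhi : u * (5 * smax + delta) <= delta.
  apply: le_trans (_ : u * (5 * smax + delta) <= u * D) _; last by rewrite uD.
  by rewrite ler_wpM2l ?ltW // hD; lra.
have ulo : 4 * u * smin <= delta.
  apply: le_trans (_ : 4 * u * smin <= u * D) _; last by rewrite uD.
  by rewrite (mulrC 4) -mulrA ler_wpM2l ?ltW // hD; lra.
pose c := u * delta / 2.
have c0 : 0 < c by rewrite /c divr_gt0 // mulr_gt0.
pose K : R := ((2 * k) ^ 3)%:R.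
pose K' := K * 2 / (alpha ^+ 2 * c).
have eK : K' * (alpha ^+ 2 * c) / 2 = K.
  by rewrite /K'; field; rewrite !gt_eqF.
move/cvgryPge: nrho => /(_ K') [N3 _ H3].
pose N1 := (Num.trunc (2 / alpha)).+1.
pose N0 := maxn (maxn 1 N1) N3.
have bnd : forall n, (N0 <= n)%N ->
    \sum_(zM : {ffun 'I_n -> 'I_k} * 'M[bool]_n | badb alpha (rho n) smin smax delta zM)
      sbm_pmf pi (rho n) S zM.1 zM.2 <= 1 / (2 ^ n.+1)%:R.
  move=> n; rewrite !geq_max => /andP[/andP[hn1 hN1] hN3].
  have an : 2 <= alpha * n%:R.
    have h1 := truncnS_gt (2 / alpha).
    have h2 : (N1%:R : R) <= n%:R by rewrite ler_nat.
    have : 2 / alpha < n%:R by apply: lt_le_trans h1 h2.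
    by rewrite ltr_pdivrMr // mulrC => /ltW.
  have := fin_bound pi0' pi1 Smin Smax (rho0 n) (rho1 n) smin0 hs delta0 hdl u0 u2 uhi ulo an.
  move/le_trans; apply.
  rewrite sum_const3 /Bn.
  pose x := n%:R * rho n * (alpha ^+ 2 * c) / 2.
  have -> : rho n * ((alpha * n%:R) ^+ 2 / 2) * (u * delta / 2) = n%:R * x.
    by rewrite /x /c; ring.
  apply: final_ineq => //; first by apply: leq_trans k2.
  rewrite (_ : ((2 * k) ^ 3)%:R = K) // -eK /x; apply: ler_wpM2r; first by rewrite invr_ge0.
  apply: ler_wpM2r; first by rewrite mulr_ge0 ?exprn_ge0 ?ltW.
  exact: H3.
pose atom n (zM : {ffun 'I_n -> 'I_k} * 'M[bool]_n) := [set w | Z n w = zM.1 /\ A n w = zM.2].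
pose Bs n := \big[setU/set0]_(zM : {ffun 'I_n -> 'I_k} * 'M[bool]_n |
   badb alpha (rho n) smin smax delta zM) atom n zM.
pose F n := if (N0 <= n)%N then Bs n else set0.
have mF n : measurable (F n).
  rewrite /F; case: ifP => _ //; apply: bigsetU_measurable => zM _.
  exact: (atoms n zM.1 zM.2).1.
have PF n : (P (F n) <= (1 / (2 ^ n.+1)%:R)%:E)%E.
  rewrite /F; case: ifP => hn; last by rewrite measure0 lee_fin divr_ge0.
  apply: le_trans (meas_bigsetU_le P _ _ (fun zM => (atoms n zM.1 zM.2).1)) _.
  rewrite (eq_bigr (fun zM => (sbm_pmf pi (rho n) S zM.1 zM.2)%:E)); last first.
    by move=> zM _; exact: (atoms n zM.1 zM.2).2.
  by rewrite sumEFin lee_fin; exact: bnd n hn.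
have sumF : (\sum_(0 <= n <oo) P (F n) < +oo)%E.
  apply: (@le_lt_trans _ _ 1%:E); last exact: ltry.
  apply: le_trans (epsilon_trick0 xpredT ler01).
  by apply: lee_nneseries => // n _; exact: PF.
have lim0 := lim_sup_set_cvg0 mF sumF.
exists (lim_sup_set F); split => //.
  rewrite /lim_sup_set; apply: bigcapT_measurable => m.
  by apply: bigcup_measurable => j _; exact: mF.
move=> w /= ngood m _ /=.
apply: contrapT => hno; apply: ngood.
exists (maxn m N0) => // j /=; rewrite geq_max => /andP[hjm hjN].
have nb : ~~ badb alpha (rho j) smin smax delta (Z j w, A j w).
  apply/negP => bad; apply: hno; exists j => //.
  rewrite /F hjN; apply: (@in_bigsetU _ _ _ _ _ (Z j w, A j w)) => //.
  exact: mem_index_enum.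
move: nb; rewrite /badb negbK => /forallP H e ce a b.
have := H e; rewrite /condb => /implyP H'.
have : okb (rho j) smin smax delta (Z j w, A j w).2 e.
  by apply: H'; apply/forallP => a'; exact: ce a'.
by move=> /forallP /(_ a) /forallP /(_ b).
Qed.
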